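(* Let $c\in\mathbb{N}$ and $I=\mathbb{N}\times[c]$. Then every $\mathrm{Sym}$-invariant lattice $L\subseteq\mathbb{Z}^{(I)}$ has a finite equivariant Graver basis, i.e. there is a finite set $\mathcal{G}\subseteq L$ such that $\mathrm{Sym}(\mathcal{G})=\{\sigma(\mathbf{u})\mid\sigma\in\mathrm{Sym},\mathbf{u}\in\mathcal{G}\}$ is the Graver basis of $L$.
   Context: $\mathbb{N}=\{1,2,\dots\}$, $[c]=\{1,\dots,c\}$. For a set $J$, $\mathbb{Z}^{(J)}$ is the free abelian group with basis $J$, i.e. finitely supported integer vectors $\mathbf{u}=(u_j)_{j\in J}$; a lattice is any subgroup of $\mathbb{Z}^{(J)}$. Define the partial order $\mathbf{u}\sqsubseteq\mathbf{v}$ iff $u_jv_j\ge0$ and $|u_j|\le|v_j|$ for all $j\in J$. The Graver basis of a lattice $L$ is the set of all $\sqsubseteq$-minimal elements of $L\setminus\{\mathbf{0}\}$. $\mathrm{Sym}$ denotes the group of permutations of $\mathbb{N}$ fixing all but finitely many elements. It acts on $\mathbb{Z}^{(\mathbb{N}\times[c])}$ by the linear extension of $\sigma(\mathbf{e}_{i,j})=\mathbf{e}_{\sigma(i),j}$, where $\mathbf{e}_{i,j}$ are the standard basis vectors. A lattice $L$ is $\mathrm{Sym}$-invariant if $\sigma(L)\subseteq L$ for all $\sigma\in\mathrm{Sym}$. *)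

(* Defs.v *)
From mathcomp Require Import all_boot all_order all_algebra.
From Stdlib Require Import List.
Set Implicit Arguments. Unset Strict Implicit. Unset Printing Implicit Defensive.
Import Order.TTheory GRing.Theory Num.Theory.
Local Open Scope ring_scope.

(* Index set N x [c]; N is modelled by nat (relabelling i |-> i+1),
   [c] by 'I_c. An integer vector is a function; it lies in Z^(I) iff
   it is finitely supported. *)
Definition vec (c : nat) := nat -> 'I_c -> int.

Definition fin_supp (c : nat) (u : vec c) : Prop :=
  exists N : nat, forall i : nat, (N <= i)%N -> forall j : 'I_c, u i j = 0.

Definition is_lattice (c : nat) (L : vec c -> Prop) : Prop :=
  (forall u, L u -> fin_supp u) /\
  L (fun _ _ => 0) /\
  (forall u v, L u -> L v -> L (fun i j => u i j + v i j)) /\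
  (forall u, L u -> L (fun i j => - u i j)).

Definition in_Sym (s : nat -> nat) : Prop :=
  bijective s /\ exists N : nat, forall i : nat, (N <= i)%N -> s i = i.

(* v = sigma(u), where sigma(e_{i,j}) = e_{sigma(i),j}, i.e. v_{sigma(i),j} = u_{i,j}
   (this determines v since sigma is surjective). *)
Definition act_rel (c : nat) (s : nat -> nat) (u v : vec c) : Prop :=
  forall (i : nat) (j : 'I_c), v (s i) j = u i j.

Definition Sym_invariant (c : nat) (L : vec c -> Prop) : Prop :=
  forall s, in_Sym s -> forall u v, L u -> act_rel s u v -> L v.

Definition sqle (c : nat) (u v : vec c) : Prop :=
  forall (i : nat) (j : 'I_c), 0 <= u i j * v i j /\ `|u i j| <= `|v i j|.

Definition nonzero (c : nat) (u : vec c) : Prop :=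
  exists (i : nat) (j : 'I_c), u i j != 0.

Definition in_graver (c : nat) (L : vec c -> Prop) (u : vec c) : Prop :=
  L u /\ nonzero u /\
  forall v, L v -> nonzero v -> sqle v u -> forall i j, v i j = u i j.

(* Main.v *)
Require Import Defs.
From mathcomp Require Import all_boot all_order all_algebra.
From mathcomp Require Import zify.
From Stdlib Require Import List.
From Stdlib Require Import Classical ClassicalEpsilon.
Set Implicit Arguments. Unset Strict Implicit. Unset Printing Implicit Defensive.
Import Order.TTheory GRing.Theory Num.Theory.

Section WQO.
Variable X : Type.

Definition good (R : X -> X -> Prop) :=
  forall h : nat -> X, exists i j, (i < j)%N /\ R (h i) (h j).

Definition transitiveP (R : X -> X -> Prop) :=
  forall x y z, R x y -> R y z -> R x z.

Lemma incr_mono (phi : nat -> nat) :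
  (forall k, (phi k < phi k.+1)%N) -> forall k l, (k < l)%N -> (phi k < phi l)%N.
Proof.
move=> H k l; elim: l => [//|l IH]; rewrite ltnS leq_eqVlt => /orP [/eqP ->|kl].
  exact: H.
by apply: ltn_trans (IH kl) (H l).
Qed.

Lemma chain_lemma (R : X -> X -> Prop) : good R -> forall h : nat -> X,
  exists phi : nat -> nat, (forall k, (phi k < phi k.+1)%N) /\
     (forall k, R (h (phi k)) (h (phi k.+1))).
Proof.
move=> gR h.
have [N HN] : exists N, forall i, (N <= i)%N -> exists j, (i < j)%N /\ R (h i) (h j).
  apply: NNPP => HN.
  have HT : forall N, exists i, (N <= i)%N /\ forall j, (i < j)%N -> ~ R (h i) (h j).
    move=> N; apply: NNPP => H1; apply: HN; exists N => i Ni.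
    apply: NNPP => H2; apply: H1; exists i; split => // j ij Rij.
    by apply: H2; exists j.
  pose T N := proj1_sig (constructive_indefinite_description _ (HT N)).
  have TP N : (N <= T N)%N /\ forall j, (T N < j)%N -> ~ R (h (T N)) (h j).
    exact: (proj2_sig (constructive_indefinite_description _ (HT N))).
  pose t k := iter k (fun x => T x.+1) (T 0).
  have tinc : forall k, (t k < t k.+1)%N by move=> k; exact: (proj1 (TP _)).
  have [i [j [ij Rij]]] := gR (fun k => h (t k)).
  have tij := incr_mono tinc ij.
  case: i ij tij Rij => [|i] ij tij Rij.
    by apply: (proj2 (TP 0)) tij Rij.
  by apply: (proj2 (TP (t i).+1)) tij Rij.
have HJ : forall i, exists j, (N <= i)%N -> (i < j)%N /\ R (h i) (h j).
  move=> i; case: (leqP N i) => Ni.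
    by have [j Hj] := HN i Ni; exists j.
  by exists 0.
pose J i := proj1_sig (constructive_indefinite_description _ (HJ i)).
have JP i : (N <= i)%N -> (i < J i)%N /\ R (h i) (h (J i)).
  exact: (proj2_sig (constructive_indefinite_description _ (HJ i))).
pose phi k := iter k J N.
have phiN : forall k, (N <= phi k)%N.
  elim => [//|k IH] /=; apply: leq_trans IH (ltnW (proj1 (JP _ IH))).
exists phi; split => k; [exact: (proj1 (JP _ (phiN k))) | exact: (proj2 (JP _ (phiN k)))].
Qed.

Lemma chain_trans (R : X -> X -> Prop) (h : nat -> X) (phi : nat -> nat) :
  transitiveP R -> (forall k, R (h (phi k)) (h (phi k.+1))) ->
  forall k l, (k < l)%N -> R (h (phi k)) (h (phi l)).
Proof.
move=> tR H k l; elim: l => [//|l IH]; rewrite ltnS leq_eqVlt => /orP [/eqP ->|kl].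
  exact: H.
exact: tR (IH kl) (H l).
Qed.

Lemma good_and (R S : X -> X -> Prop) : transitiveP R -> good R -> good S ->
  good (fun x y => R x y /\ S x y).
Proof.
move=> tR gR gS h.
have [phi [pinc pR]] := chain_lemma gR h.
have [k [l [kl Skl]]] := gS (fun k => h (phi k)).
exists (phi k), (phi l); split; first by apply: (incr_mono pinc kl).
split => //.  exact: (chain_trans tR pR kl).
Qed.


Inductive emb (R : X -> X -> Prop) : list X -> list X -> Prop :=
| emb_nil l : emb R nil l
| emb_cons a b w l : R a b -> emb R w l -> emb R (a :: w) (b :: l)
| emb_skip b w l : emb R w l -> emb R w (b :: l).

Lemma min_len (Q : list X -> Prop) : (exists w, Q w) ->
  exists w, Q w /\ forall w', Q w' -> (size w <= size w')%N.
Proof.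
case=> w Qw.
have : forall n w, (size w <= n)%N -> Q w -> exists w, Q w /\ forall w', Q w' -> (size w <= size w')%N.
  elim => [|n IH] w0 Hs Qw0.
    by exists w0; split => // w' _; move: Hs; rewrite leqn0 => /eqP ->.
  case: (classic (exists w', Q w' /\ (size w' < size w0)%N)) => [[w' [Qw' Hw']]|Hn].
    apply: (IH w') => //; lia.
  exists w0; split => // w' Qw'; case: (leqP (size w0) (size w')) => // Hlt.
  by exfalso; apply: Hn; exists w'.
by move/(_ (size w) w (leqnn _) Qw).
Qed.

Definition bad (R : X -> X -> Prop) (f : nat -> list X) :=
  forall i j, (i < j)%N -> ~ emb R (f i) (f j).

Lemma higman (R : X -> X -> Prop) (x0 : X) : transitiveP R -> good R ->
  forall f : nat -> list X, exists i j, (i < j)%N /\ emb R (f i) (f j).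
Proof.
move=> tR gR f0; apply: NNPP => Hf0.
have bf0 : bad R f0.
  move=> i j ij E; apply: Hf0; by exists i, j.
pose ext (p : nat -> list X) n := exists g, bad R g /\ forall i, (i < n)%N -> g i = p i.
pose upd (p : nat -> list X) n w := fun i => if (i < n)%N then p i else w.
pose P p n w := ext (upd p n w) n.+1 /\ forall w', ext (upd p n w') n.+1 -> (size w <= size w')%N.
pose ch p n := epsilon (inhabits nil) (P p n).
have chP : forall p n, ext p n -> P p n (ch p n).
  move=> p n [g [bg Hg]]; apply: (epsilon_spec (inhabits nil) (P p n)).
  apply: min_len; exists (g n); exists g; split => // i; rewrite ltnS leq_eqVlt /upd.
  case/orP => [/eqP ->|ilt]; first by rewrite ltnn.
  by rewrite ilt Hg.
pose pref := fix pref n := match n with 0 => fun _ => nil | n'.+1 => upd (pref n') n' (ch (pref n') n') end.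
pose m n := ch (pref n) n.
have prefm : forall n i, (i < n)%N -> pref n i = m i.
  elim => [//|n IH] i; rewrite ltnS leq_eqVlt /= /upd => /orP [/eqP ->|ilt].
    by rewrite ltnn.
  by rewrite ilt IH.
have extn : forall n, ext (pref n) n.
  elim => [|n IH]; first by exists f0.
  exact: (proj1 (chP _ _ IH)).
have bm : bad R m.
  move=> i j ij.
  have [g [bg Hg]] := extn j.+1.
  have ij1 : (i < j.+1)%N by apply: ltn_trans ij _.
  rewrite -(prefm j.+1 i ij1) -(prefm j.+1 j (ltnSn j)) -(Hg i ij1) -(Hg j (ltnSn j)).
  exact: (bg i j ij).
have minm : forall n g, bad R g -> (forall i, (i < n)%N -> g i = m i) -> (size (m n) <= size (g n))%N.
  move=> n g bg Hg; apply: (proj2 (chP _ _ (extn n))).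
  exists g; split => // i; rewrite ltnS leq_eqVlt /upd.
  case/orP => [/eqP ->|ilt]; first by rewrite ltnn.
  by rewrite ilt Hg // prefm.
have mne : forall n, m n = seq.head x0 (m n) :: seq.behead (m n).
  move=> n; case E: (m n) => [|a t] //; exfalso.
  apply: (bm n n.+1 (ltnSn n)); rewrite E; exact: emb_nil.
pose a n := seq.head x0 (m n).
pose t n := seq.behead (m n).
have [phi [pinc pR]] := chain_lemma gR a.
have pmono := incr_mono pinc.
have p0 : forall k, (phi 0 <= phi k)%N.
  by case => // k; apply: ltnW; apply: pmono.
pose g i := if (i < phi 0)%N then m i else t (phi (i - phi 0)).
have: ~ bad R g.
  move=> bg.
  have := minm (phi 0) g bg.
  have -> : g (phi 0) = t (phi 0) by rewrite /g ltnn subnn.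
  have Hs : size (m (phi 0)) = (size (t (phi 0))).+1 by rewrite [in LHS]mne.
  have Hg : forall i, (i < phi 0)%N -> g i = m i by move=> i ip; rewrite /g ip.
  by move/(_ Hg); rewrite Hs ltnn.
apply; move=> i j ij E.
rewrite /g in E.
case: (ltnP j (phi 0)) => jp.
  rewrite jp (ltn_trans ij jp) in E; exact: (bm i j ij E).
rewrite (ltnNge j) jp /= in E.
case: (ltnP i (phi 0)) => ip.
  rewrite ip in E.
  apply: (bm i (phi (j - phi 0))); first exact: (leq_trans ip (p0 _)).
  rewrite (mne (phi (j - phi 0))); apply: emb_skip; exact: E.
rewrite ltnNge ip /= in E.
have kl : (i - phi 0 < j - phi 0)%N by lia.
apply: (bm _ _ (pmono _ _ kl)).
rewrite (mne (phi (i - phi 0))) (mne (phi (j - phi 0))).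
apply: emb_cons => //.
exact: (chain_trans tR pR kl).
Qed.

End WQO.

Lemma nat_good : @good nat (fun a b : nat => (a <= b)%N).
Proof.
move=> h.
suff [i Hi] : exists i, forall j, (h i <= h j)%N by exists i, i.+1; split.
have : forall n i, (h i <= n)%N -> exists i, forall j, (h i <= h j)%N.
  elim => [|n IH] i Hi.
    by exists i => j; move: Hi; rewrite leqn0 => /eqP ->.
  case: (classic (exists j, (h j < h i)%N)) => [[j Hj]|Hn].
    apply: (IH j); lia.
  exists i => j; case: (leqP (h i) (h j)) => // Hj.
  by exfalso; apply: Hn; exists j.
by move/(_ (h 0) 0 (leqnn _)).
Qed.


Lemma good_mono (X : Type) (R S : X -> X -> Prop) : good R -> (forall x y, R x y -> S x y) -> good S.
Proof. move=> gR H h; have [i [j [ij Rij]]] := gR h; exists i, j; split => //; exact: H. Qed.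

Local Open Scope ring_scope.

Definition Pz (a b : int) : Prop := ((0 <= a) = (0 <= b)) /\ (absz a <= absz b)%N.

Lemma Pz_trans : transitiveP Pz.
Proof. move=> x y z [h1 h2] [h3 h4]; split; [by rewrite h1 h3 | exact: leq_trans h2 h4]. Qed.

Lemma sign_good : good (fun a b : int => (0 <= a) = (0 <= b)).
Proof.
move=> h.
case E0: (0 <= h 0%N); case E1: (0 <= h 1%N); case E2: (0 <= h 2%N);
  try by [exists 0%N, 1%N; rewrite E0 E1 | exists 0%N, 2%N; rewrite E0 E2 | exists 1%N, 2%N; rewrite E1 E2].
Qed.

Lemma Pz_good : good Pz.
Proof.
apply: good_and.
- by move=> x y z -> ->.
- exact: sign_good.
- move=> h; have [i [j [ij H]]] := nat_good (fun n => absz (h n)); by exists i, j.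
Qed.

Definition colRk (c k : nat) (x y : 'I_c -> int) : Prop :=
  forall j : 'I_c, (j < k)%N -> Pz (x j) (y j).

Lemma colRk_trans c k : transitiveP (@colRk c k).
Proof. move=> x y z H1 H2 j jk; exact: Pz_trans (H1 j jk) (H2 j jk). Qed.

Lemma colRk_good c k : good (@colRk c k).
Proof.
elim: k => [|k IH].
  by move=> h; exists 0%N, 1%N; split => // j.
pose S (x y : 'I_c -> int) := forall j : 'I_c, (j : nat) = k -> Pz (x j) (y j).
have gS : good S.
  move=> h; case: (classic (exists j : 'I_c, (j : nat) = k)) => [[j0 Hj0]|Hn].
    have [i [j [ij H]]] := Pz_good (fun n => h n j0); exists i, j; split => // j' Hj'.
    by have -> : j' = j0 by apply: val_inj; rewrite /= Hj' Hj0.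
  by exists 0%N, 1%N; split => // j' Hj'; exfalso; apply: Hn; exists j'.
apply: good_mono (good_and (@colRk_trans c k) IH gS) _.
move=> x y [H1 H2] j; rewrite ltnS leq_eqVlt => /orP [/eqP jk|jk].
  exact: H2 j jk.
exact: H1.
Qed.

Lemma Pz_conf (a b : int) : Pz a b -> 0 <= a * b /\ `|a| <= `|b|.
Proof.
case=> hs ha; split.
  case: (boolP (0 <= a)) => Ha.
    by rewrite mulr_ge0 // -hs.
  have Hb : ~~ (0 <= b) by rewrite -hs.
  rewrite -ltNge in Ha; rewrite -ltNge in Hb.
  by rewrite ltW // nmulr_rgt0.
by rewrite -!abszE lez_nat.
Qed.

Definition swapn (a b i : nat) : nat := if i == a then b else if i == b then a else i.

Lemma swapnK a b : cancel (swapn a b) (swapn a b).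
Proof.
move=> i; rewrite /swapn.
case: (eqVneq i a) => [->|ia]; first by rewrite eqxx; case: (eqVneq b a) => [->|].
case: (eqVneq i b) => [->|ib]; first by rewrite eqxx.
by rewrite (negbTE ia) (negbTE ib).
Qed.

Lemma sym_ext (N : nat) (f : nat -> nat) :
  (forall i, (i < N)%N -> (i <= f i)%N) ->
  (forall i j, (i < N)%N -> (j < N)%N -> f i = f j -> i = j) ->
  exists s, in_Sym s /\ (forall i, (i < N)%N -> s i = f i) /\
    (forall k, (N <= k)%N -> (forall i, (i < N)%N -> f i <> k) -> s k = k).
Proof.
elim: N => [|N IH] H1 H2.
  exists id; split; last by split.
  split; first by exists id.
  by exists 0%N.
have [s [[bs [M HM]] [Hs1 Hs2]]] : exists s, in_Sym s /\ (forall i, (i < N)%N -> s i = f i) /\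
    (forall k, (N <= k)%N -> (forall i, (i < N)%N -> f i <> k) -> s k = k).
  apply: IH => [i iN|i j iN jN]; first by apply: H1; apply: ltn_trans iN _.
  by apply: H2; apply: ltn_trans (ltnSn N).
have fN : (N <= f N)%N by apply: H1.
have fNi : forall i, (i < N)%N -> f i <> f N.
  by move=> i iN e; have := H2 i N (ltn_trans iN (ltnSn N)) (ltnSn N) e; lia.
exists (fun i => s (swapn N (f N) i)); split; [split|split].
- apply: bij_comp bs _; exists (swapn N (f N)); exact: swapnK.
- exists (maxn M (maxn N.+1 (f N).+1)) => i Hi.
  have -> : swapn N (f N) i = i.
    rewrite /swapn; have -> : (i == N) = false by apply/negbTE; lia.
    by have -> : (i == f N) = false by apply/negbTE; lia.
  apply: HM; lia.
- move=> i; rewrite ltnS leq_eqVlt => /orP [/eqP ->|iN].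
    rewrite /swapn eqxx; apply: Hs2 => //.
  have -> : swapn N (f N) i = i.
    rewrite /swapn; have -> : (i == N) = false by apply/negbTE; lia.
    by have -> : (i == f N) = false by apply/negbTE; lia.
  exact: Hs1.
- move=> k Nk Hk.
  have -> : swapn N (f N) k = k.
    rewrite /swapn; have -> : (k == N) = false by apply/negbTE; lia.
    have -> : (k == f N) = false by apply/negbTE/eqP => e; apply: (Hk N) => //.
    by [].
  apply: Hs2; first lia.
  move=> i iN; apply: Hk; lia.
Qed.

Lemma emb_fun (X : Type) (R : X -> X -> Prop) (x0 : X) (w l : list X) : emb R w l ->
  exists f : nat -> nat,
    (forall i, (i < size w)%N -> (f i < size l)%N /\ R (seq.nth x0 w i) (seq.nth x0 l (f i)) /\ (i <= f i)%N) /\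
    (forall i j, (i < j)%N -> (j < size w)%N -> (f i < f j)%N).
Proof.
elim => {w l} [l|a b w l Rab _ [f [F1 F2]]|b w l _ [f [F1 F2]]].
- by exists id; split.
- exists (fun i => if i is i'.+1 then (f i').+1 else 0%N); split.
    case => [|i] /= Hi; first by split.
    have [h1 [h2 h3]] := F1 i Hi; by split.
  case => [|i] [|j] //= ij jw; exact: F2.
- exists (fun i => (f i).+1); split.
    move=> i Hi; have [h1 [h2 h3]] := F1 i Hi; split => //; split => //; lia.
  move=> i j ij jw; have := F2 i j ij jw; lia.
Qed.

Lemma Sym_inv (s : nat -> nat) : in_Sym s ->
  exists s', in_Sym s' /\ cancel s s' /\ cancel s' s.
Proof.
case=> [[s' ss' s's] [M HM]]; exists s'; split => //; split.
  by exists s.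
exists M => i iM; rewrite -{1}(HM i iM); exact: ss'.
Qed.

Lemma graver_inv (c : nat) (L : vec c -> Prop) : Sym_invariant L ->
  forall s, in_Sym s -> forall u v, in_graver L u -> act_rel s u v -> in_graver L v.
Proof.
move=> Linv s Hs u v [Lu [[i0 [j0 nz]] Hmin]] Hr.
have [s' [Hs' [ss' s's]]] := Sym_inv Hs.
split; first exact: Linv s Hs u v Lu Hr.
split; first by exists (s i0), j0; rewrite Hr.
move=> w Lw [i1 [j1 nzw]] sq k j.
pose w' : vec c := fun i j => w (s i) j.
have Lw' : L w'.
  apply: (Linv s' Hs' w w' Lw) => i j'; by rewrite /w' s's.
have nzw' : nonzero w' by exists (s' i1), j1; rewrite /w' s's.
have sq' : sqle w' u.
  move=> i j'; rewrite /w' -Hr; exact: sq.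
have := Hmin w' Lw' nzw' sq' (s' k) j.
by rewrite /w' s's -Hr s's.
Qed.

Theorem theorem4p1 (c : nat) (hc : (0 < c)%N) (L : vec c -> Prop) :
  is_lattice L -> Sym_invariant L ->
  exists G : list (vec c),
    (forall g, In g G -> L g) /\
    (forall u : vec c,
       in_graver L u <->
       exists s, in_Sym s /\ exists g, In g G /\ act_rel s g u).
Proof.
move=> [Lfs [L0 [LD LN]]] Linv.
pose S := in_graver L.
pose Img (G : list (vec c)) (u : vec c) := exists s, in_Sym s /\ exists g, In g G /\ act_rel s g u.
suff [G [GS GI]] : exists G, (forall g, In g G -> S g) /\ forall u, S u -> Img G u.
  exists G; split => [g /GS [] //|u]; split; first exact: GI.
  case=> s [Hs [g [Gg Hr]]]; exact: (graver_inv Linv Hs (GS g Gg) Hr).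
apply: NNPP => Hno.
have H : forall G, (forall g, In g G -> S g) -> exists u, S u /\ ~ Img G u.
  move=> G HG; apply: NNPP => H'; apply: Hno; exists G; split => // u Su.
  apply: NNPP => NI; apply: H'; by exists u.
pose Q (G : list (vec c)) (u : vec c) := (forall g, In g G -> S g) -> S u /\ ~ Img G u.
have HQ : forall G, exists u, Q G u.
  move=> G; case: (classic (forall g, In g G -> S g)) => [HG|HG].
    by have [u Hu] := H G HG; exists u.
  by exists (fun _ _ => 0) => HG'.
pose F G := proj1_sig (constructive_indefinite_description _ (HQ G)).
have FP G : Q G (F G) := proj2_sig (constructive_indefinite_description _ (HQ G)).
pose pl := fix pl n := match n with 0%N => nil | n'.+1 => F (pl n') :: pl n' end.
pose u n := F (pl n).
have plS : forall n g, In g (pl n) -> S g.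
  elim => [//|n IH] g /= [<-|Hg]; [exact: (proj1 (FP _ IH)) | exact: IH].
have uS n : S (u n) := proj1 (FP _ (plS n)).
have uNI n : ~ Img (pl n) (u n) := proj2 (FP _ (plS n)).
have uIn : forall m n, (m < n)%N -> In (u m) (pl n).
  move=> m; elim => [//|n IH]; rewrite ltnS leq_eqVlt => /orP [/eqP ->|mn].
    by left.
  by right; exact: IH mn.
have HB n : exists N, forall i, (N <= i)%N -> forall j, u n i j = 0 := Lfs _ (proj1 (uS n)).
pose B n := proj1_sig (constructive_indefinite_description _ (HB n)).
have BP n : forall i, (B n <= i)%N -> forall j, u n i j = 0 :=
  proj2_sig (constructive_indefinite_description _ (HB n)).
pose w n := seq.map (u n) (iota 0 (B n)).
have [m [n [mn E]]] := higman (fun _ => 0) (@colRk_trans c c) (@colRk_good c c) w.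
have [f [F1 F2]] := emb_fun (fun _ => 0) E.
have Sw k : size (w k) = B k by rewrite /w size_map size_iota.
have F1' : forall i, (i < B m)%N -> (f i < B n)%N /\ colRk c (u m i) (u n (f i)) /\ (i <= f i)%N.
  move=> i Hi; have := F1 i; rewrite !Sw => /(_ Hi) [h1 [h2 h3]]; split => //; split => //.
  by move: h2; rewrite /w !(nth_map 0%N) ?size_iota // !nth_iota.
have [s [Hs [Hs1 _]]] : exists s, in_Sym s /\ (forall i, (i < B m)%N -> s i = f i) /\
    (forall k, (B m <= k)%N -> (forall i, (i < B m)%N -> f i <> k) -> s k = k).
  apply: sym_ext => [i Hi|i j Hi Hj fij]; first exact: (proj2 (proj2 (F1' i Hi))).
  case: (ltngtP i j) => // ij.
    by have := F2 i j ij; rewrite Sw => /(_ Hj); rewrite fij ltnn.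
  by have := F2 j i ij; rewrite Sw => /(_ Hi); rewrite fij ltnn.
have [s' [Hs' [ss' s's]]] := Sym_inv Hs.
pose v : vec c := fun k j => u m (s' k) j.
have Hr : act_rel s (u m) v by move=> i j; rewrite /v ss'.
have Lv : L v := Linv s Hs (u m) v (proj1 (uS m)) Hr.
have nzv : nonzero v.
  have [i [j nz]] := proj1 (proj2 (uS m)); exists (s i), j; by rewrite /v ss'.
have sq : sqle v (u n).
  move=> k j; have [i ->] : exists i, k = s i by exists (s' k); rewrite s's.
  rewrite /v ss'.
  case: (ltnP i (B m)) => Hi.
    rewrite Hs1 //; have [_ [R _]] := F1' i Hi.
    exact: (Pz_conf (R j (ltn_ord j))).
  rewrite (BP m i Hi) mul0r normr0; split => //.
have eq := proj2 (proj2 (uS n)) v Lv nzv sq.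
apply: (uNI n); exists s; split => //; exists (u m); split; first exact: uIn.
by move=> i j; rewrite -eq /v ss'.
Qed.
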